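(* Let $G$ be a graph of order $n\ge 9$. If $\tau(G)\le\frac{n}{2}$ and ${\rm diam}(G)=3$, then $\beta_p(G)\le n-3$.
   Context: All graphs are finite, simple, undirected and connected. Two vertices $u,v$ are twins if $N(u)\setminus\{v\}=N(v)\setminus\{u\}$; the twin number $\tau(G)$ is the maximum cardinality of an equivalence class of the twin relation. For a partition $\Pi=\{S_1,\dots,S_k\}$ of $V(G)$, $r(u|\Pi)=(d(u,S_1),\dots,d(u,S_k))$ with $d(u,S)=\min_{w\in S}d(u,w)$; $\Pi$ is locating if $r(u|\Pi)\ne r(v|\Pi)$ for all distinct $u,v$; $\beta_p(G)$ is the minimum size of a locating partition. *)

(* Defs.v *)
From mathcomp Require Import all_boot.
Set Implicit Arguments.
Unset Strict Implicit.
Unset Printing Implicit Defensive.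

Section Graphs.
Variables (T : finType) (e : rel T).

Definition simple_graph := symmetric e /\ irreflexive e.

Definition connected_graph := forall u v : T, connect e u v.

Definition walkb (n : nat) (u v : T) : bool :=
  [exists p : n.-tuple T, path e u p && (last u p == v)].

(* distance: the least n such that a walk of length n from u to v exists
   (searched among n < #|T|, which suffices in a connected graph) *)
Definition dist (u v : T) : nat := find (fun n => walkb n u v) (iota 0 #|T|).

Definition diam : nat := \max_(u : T) \max_(v : T) dist u v.

Definition nbhd (u : T) : {set T} := [set w | e u w].

Definition twins (u v : T) : bool := (nbhd u :\ v) == (nbhd v :\ u).

Definition twin_class (u : T) : {set T} := [set v | twins u v].

Definition twin_number : nat := \max_(u : T) #|twin_class u|.

Definition dist_set (u : T) (S : {set T}) : nat :=
  \big[minn/#|T|]_(w in S) dist u w.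

Definition locating_partition (P : {set {set T}}) : bool :=
  partition P [set: T] &&
  [forall u : T, forall v : T,
     (u != v) ==> [exists S in P, dist_set u S != dist_set v S]].

Definition partition_dim : nat :=
  \big[minn/#|T|]_(P : {set {set T}} | locating_partition P) #|P|.

End Graphs.

(* Main.v *)
Require Import Defs.
From mathcomp Require Import all_boot.
From mathcomp Require Import zify.
Set Implicit Arguments.
Unset Strict Implicit.
Unset Printing Implicit Defensive.

Ltac kill := match goal with
 | H : is_true (negb (?a == ?a)) |- _ => by rewrite eqxx in H
 | H : (?a == ?a) = false |- _ => by rewrite eqxx in H
 end.

Ltac neqs := repeat match goal with
 | H : is_true (negb (?a == ?b)) |- context[?a == ?b] => rewrite (negbTE H)
 | H : is_true (negb (?a == ?b)) |- context[?b == ?a] => rewrite (eq_sym b a) (negbTE H)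
 end.

Definition key (T : eqType) (x1 y1 x2 y2 x3 y3 x : T) :=
  if x == y1 then x1 else if x == y2 then x2 else if x == y3 then x3 else x.

Lemma key_pair (T : eqType) (x1 y1 x2 y2 x3 y3 u v : T) :
  uniq [:: x1; y1; x2; y2; x3; y3] -> u != v ->
  key x1 y1 x2 y2 x3 y3 u = key x1 y1 x2 y2 x3 y3 v ->
  [|| (u == x1) && (v == y1), (u == y1) && (v == x1), (u == x2) && (v == y2),
      (u == y2) && (v == x2), (u == x3) && (v == y3) | (u == y3) && (v == x3)].
Proof.
rewrite /= !inE !negb_or -!andbA => H; repeat (case/andP: H => ? H).
move=> huv; rewrite /key.
repeat (case: ifP => [/eqP ?|?]); move=> ?; subst; rewrite ?eqxx ?orbT //; try kill.
Qed.

Lemma key_r (T : eqType) (x1 y1 x2 y2 x3 y3 r y : T) :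
  r \notin [:: x1; y1; x2; y2; x3; y3] ->
  (key x1 y1 x2 y2 x3 y3 y == key x1 y1 x2 y2 x3 y3 r) = (y == r).
Proof.
rewrite !inE !negb_or -?andbA => H; repeat (case/andP: H => ? H).
rewrite /key; apply/eqP/eqP.
  by repeat (case: ifP => [/eqP ?|?]); move=> ?; subst; try kill.
by move=> ->.
Qed.

Lemma bigmin_le (I : finType) (P : pred I) (F : I -> nat) m i0 :
  P i0 -> \big[minn/m]_(i | P i) F i <= F i0.
Proof.
move=> Pi0; have : i0 \in index_enum I by rewrite mem_index_enum.
elim: (index_enum I) => // j s IH; rewrite inE big_cons => /orP[/eqP <-|/IH h].
  by rewrite Pi0 geq_minl.
by case: (P j) => //; exact: leq_trans (geq_minr _ _) h.
Qed.

Lemma arb (a b c k : nat) : 9 <= a -> a <= b + c -> k + c < 9 -> k < b.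
Proof. lia. Qed.
Lemma art (a b c : nat) : 9 <= a -> a <= b + c -> c <= 4 -> a < 2 * b.
Proof. lia. Qed.

Section Main.
Variables (T : finType) (e : rel T).
Hypothesis esym : symmetric e.
Hypothesis eirr : irreflexive e.
Hypothesis n9 : 9 <= #|T|.
Hypothesis d3 : forall x y, dist e x y <= 3.

Lemma walkb0 x y : walkb e 0 x y = (x == y).
Proof.
apply/existsP/eqP => [[p /andP[_ /eqP <-]]|->]; first by rewrite tuple0.
by exists [tuple]; rewrite /= eqxx.
Qed.

Lemma walkbS k x y : walkb e k.+1 x y = [exists z, e x z && walkb e k z y].
Proof.
apply/existsP/existsP => [[p]|[z /andP[hxz /existsP[p /andP[hp hl]]]]].
  case/tupleP: p => z p /= /andP[/andP[hxz hp] hl].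
  by exists z; rewrite hxz; apply/existsP; exists p; rewrite hp.
by exists [tuple of z :: p]; rewrite /= hxz hp.
Qed.

Lemma walkbSr k x z y : walkb e k x z -> e z y -> walkb e k.+1 x y.
Proof.
elim: k x => [|k IH] x.
  rewrite walkb0 => /eqP -> hzy; rewrite walkbS; apply/existsP; exists y.
  by rewrite hzy walkb0 eqxx.
rewrite walkbS => /existsP[w /andP[hxw hw]] hzy.
by rewrite walkbS; apply/existsP; exists w; rewrite hxw (IH _ hw hzy).
Qed.

Lemma walkb_sym k x y : walkb e k x y -> walkb e k y x.
Proof.
elim: k x y => [|k IH] x y; first by rewrite !walkb0 eq_sym.
rewrite walkbS => /existsP[z /andP[hxz hz]].
by apply: walkbSr (IH _ _ hz) _; rewrite esym.
Qed.

Lemma dist_walk x y : walkb e (dist e x y) x y.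
Proof.
move: (d3 x y); rewrite /dist => h.
have hh : has (fun n => walkb e n x y) (iota 0 #|T|) by rewrite has_find size_iota; lia.
by have := nth_find 0 hh; rewrite nth_iota ?add0n //; lia.
Qed.

Lemma dist_min x y k : walkb e k x y -> k < #|T| -> dist e x y <= k.
Proof.
move=> hw hk; rewrite leqNgt; apply/negP => hlt.
have := before_find 0 hlt; rewrite nth_iota // => hf.
by rewrite hf in hw.
Qed.

Lemma dist_sym x y : dist e x y = dist e y x.
Proof.
apply/eqP; rewrite eqn_leq; apply/andP; split; apply: dist_min;
  try (apply: walkb_sym; exact: dist_walk); have := d3 x y; have := d3 y x; lia.
Qed.

Lemma dist_eq0 x y : (dist e x y == 0) = (x == y).
Proof.
apply/eqP/eqP => [h|->].
  by have := dist_walk x y; rewrite h walkb0 => /eqP.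
by apply/eqP; rewrite -leqn0; apply: dist_min; [rewrite walkb0|lia].
Qed.

Lemma dist_xx x : dist e x x = 0.
Proof. by apply/eqP; rewrite dist_eq0. Qed.

Lemma dist_eq1 x y : (dist e x y == 1) = e x y.
Proof.
apply/eqP/idP => [h|h].
  have := dist_walk x y; rewrite h walkbS => /existsP[z /andP[hxz]].
  by rewrite walkb0 => /eqP <-.
have h1 : dist e x y <= 1.
  apply: dist_min; last lia.
  by rewrite walkbS; apply/existsP; exists y; rewrite h walkb0 eqxx.
have : dist e x y != 0.
  by rewrite dist_eq0; apply/eqP => exy; rewrite exy eirr in h.
lia.
Qed.

Lemma dist_lip x z y : e x z -> dist e x y <= (dist e z y).+1.
Proof.
move=> hxz; apply: dist_min; last by have := d3 z y; lia.
by rewrite walkbS; apply/existsP; exists z; rewrite hxz dist_walk.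
Qed.

Lemma dist_step x y k : dist e x y = k.+1 -> exists2 z, e x z & dist e z y = k.
Proof.
move=> h; have := dist_walk x y; rewrite h walkbS => /existsP[z /andP[hxz hz]].
exists z => //; apply/eqP; rewrite eqn_leq; apply/andP; split.
  by apply: dist_min => //; have := d3 x y; rewrite h; lia.
by have := dist_lip y hxz; lia.
Qed.

Lemma dist2 x z y : e x z -> e z y -> x != y -> ~~ e x y -> dist e x y = 2.
Proof.
move=> hxz hzy hxy hn.
have h2 : dist e x y <= 2.
  apply: dist_min; last lia.
  rewrite walkbS; apply/existsP; exists z; rewrite hxz walkbS; apply/existsP; exists y.
  by rewrite hzy walkb0 eqxx.
have h0 : dist e x y != 0 by rewrite dist_eq0.
have h1 : dist e x y != 1 by rewrite dist_eq1.
lia.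
Qed.

Hypothesis tw : 2 * twin_number e <= #|T|.

Lemma dist_set_mem x (S : {set T}) : x \in S -> dist_set e x S = 0.
Proof.
move=> hx; apply/eqP; rewrite -leqn0.
apply: leq_trans (@bigmin_le T (fun w => w \in S) (dist e x) #|T| x hx) _.
by have := dist_eq0 x x; rewrite eqxx => /eqP ->.
Qed.

Lemma dist_set_nmem x (S : {set T}) : x \notin S -> 0 < dist_set e x S.
Proof.
move=> hx; rewrite /dist_set; elim/big_ind: _ => //.
- lia.
- move=> a b ha hb; lia.
- move=> w hw; rewrite lt0n dist_eq0; apply: contraNneq hx => ->; exact: hw.
Qed.

Lemma dist_set1 x r : dist_set e x [set r] = dist e x r.
Proof. rewrite /dist_set big_set1E; have := d3 x r; lia. Qed.

Lemma config x1 y1 x2 y2 x3 y3 r1 r2 r3 :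
  uniq [:: x1; y1; x2; y2; x3; y3] ->
  r1 \notin [:: x1; y1; x2; y2; x3; y3] ->
  r2 \notin [:: x1; y1; x2; y2; x3; y3] ->
  r3 \notin [:: x1; y1; x2; y2; x3; y3] ->
  dist e x1 r1 != dist e y1 r1 -> dist e x2 r2 != dist e y2 r2 ->
  dist e x3 r3 != dist e y3 r3 ->
  partition_dim e <= #|T| - 3.
Proof.
move=> hu hr1 hr2 hr3 hd1 hd2 hd3.
pose k := key x1 y1 x2 y2 x3 y3.
pose P := preim_partition k [set: T].
have hP : partition P [set: T] := preim_partitionP k [set: T].
pose B x := [set y in [set: T] | k x == k y].
have BP x : B x \in P by apply: imset_f; rewrite inE.
have inB x y : (y \in B x) = (k x == k y) by rewrite !inE.
have Br r : r \notin [:: x1; y1; x2; y2; x3; y3] -> B r = [set r].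
  move=> hr; apply/setP => y; rewrite inB inE eq_sym; exact: key_r.
have hloc : locating_partition e P.
  rewrite /locating_partition hP /=; apply/forallP => u; apply/forallP => v.
  apply/implyP => huv.
  case: (eqVneq (k u) (k v)) => hk; last first.
    apply/existsP; exists (B u); rewrite BP /= dist_set_mem ?inB //.
    by rewrite eq_sym -lt0n dist_set_nmem // inB.
  have := key_pair hu huv hk.
  case/or4P => [/andP[/eqP-> /eqP->]|/andP[/eqP-> /eqP->]|/andP[/eqP-> /eqP->]|].
  - by apply/existsP; exists (B r1); rewrite BP Br // !dist_set1.
  - by apply/existsP; exists (B r1); rewrite BP Br // !dist_set1 eq_sym.
  - by apply/existsP; exists (B r2); rewrite BP Br // !dist_set1.
  case/or3P => [/andP[/eqP-> /eqP->]|/andP[/eqP-> /eqP->]|/andP[/eqP-> /eqP->]].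
  - by apply/existsP; exists (B r2); rewrite BP Br // !dist_set1 eq_sym.
  - by apply/existsP; exists (B r3); rewrite BP Br // !dist_set1.
  - by apply/existsP; exists (B r3); rewrite BP Br // !dist_set1 eq_sym.
have hcard : #|P| <= #|T| - 3.
  have -> : P = (fun c => [set y in [set: T] | c == k y]) @: (k @: [set: T]).
    by rewrite -imset_comp.
  apply: leq_trans (leq_imset_card _ _) _.
  have hsub : k @: [set: T] \subset ~: [set y1; y2; y3].
    apply/subsetP => _ /imsetP[x _ ->]; rewrite !inE /k.
    move: hu; rewrite /= !inE !negb_or -?andbA => H; repeat (case/andP: H => ? H).
    by rewrite /key; repeat (case: ifP => [/eqP ?|?]); subst; rewrite ?eqxx //= ?negb_or;
      repeat (apply/andP; split); first [assumption | rewrite eq_sym; assumption | apply/negbT; assumption].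
  apply: leq_trans (subset_leq_card hsub) _.
  have h3 : #|[set y1; y2; y3]| = 3.
    move: hu; rewrite /= !inE !negb_or -?andbA => H; repeat (case/andP: H => ? H).
    by rewrite setUC !cardsU1 cards1 !inE; neqs.
  have := cardsC [set y1; y2; y3]; rewrite h3; lia.
apply: leq_trans hcard; rewrite /partition_dim; exact: bigmin_le.
Qed.

Lemma pick (A : {set T}) (s : seq T) : size s < #|A| -> exists2 x, x \in A & x \notin s.
Proof.
move=> h; case: (boolP [exists x in A, x \notin s]) => [/exists_inP[x hx hs]|/exists_inPn hn].
  by exists x.
have : A \subset [set x in s].
  by apply/subsetP => x hx; rewrite inE; move: (hn x hx); rewrite negbK.
move/subset_leq_card => h2.
have h3 : #|[set x in s]| <= size s by rewrite cardsE; exact: card_size.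
exfalso; lia.
Qed.

Lemma cover_card (M : {set T}) (s : seq T) :
  (forall x, x \in M \/ x \in s) -> #|T| <= #|M| + size s.
Proof.
move=> h; have : [set: T] \subset M :|: [set x in s].
  by apply/subsetP => x _; rewrite !inE; case: (h x) => ->; rewrite ?orbT.
move/subset_leq_card; rewrite cardsT => h1.
have h2 := cardsU M [set x in s].
have h3 : #|[set x in s]| <= size s by rewrite cardsE; exact: card_size.
lia.
Qed.

Lemma two_le (S : {set T}) a b : a \in S -> b \in S -> a != b -> 1 < #|S|.
Proof.
move=> ha hb hab; have : [set a; b] \subset S by apply/subsetP => x; rewrite !inE => /orP[]/eqP->.
by move/subset_leq_card; rewrite cards2 hab.
Qed.

Lemma twins_dich (M : {set T}) :
  (forall x y z, x \in M -> y \in M -> z \notin M -> e x z = e y z) ->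
  (forall x, x \in M -> (forall y, y \in M -> ~~ e x y) \/ (forall y, y \in M -> y != x -> e x y)) ->
  forall x y, x \in M -> y \in M -> twins e x y.
Proof.
move=> hmod hdi x y hx hy; rewrite /twins; apply/eqP/setP => z; rewrite !inE.
case: (eqVneq x y) => [<-//|nxy].
case: (eqVneq z x) => [->|nzx]; first by rewrite eirr andbF.
case: (eqVneq z y) => [->|nzy]; first by rewrite eirr andbF.
rewrite /=; case: (boolP (z \in M)) => hz; last exact: hmod.
have [hxi|hxu] := hdi x hx; have [hyi|hyu] := hdi y hy.
- by rewrite (negbTE (hxi z hz)) (negbTE (hyi z hz)).
- by move: (hxi y hy); rewrite esym (hyu x hx nxy).
- by move: (hyi x hx); rewrite esym (hxu y hy) // eq_sym.
- by rewrite (hxu z hz nzx) (hyu z hz nzy).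
Qed.

Lemma twin_big (M : {set T}) x0 : x0 \in M -> (forall y, y \in M -> twins e x0 y) ->
  #|T| < 2 * #|M| -> False.
Proof.
move=> hx0 htw hlt.
have h1 : #|M| <= #|twin_class e x0|.
  by apply: subset_leq_card; apply/subsetP => y hy; rewrite inE htw.
have h2 : #|twin_class e x0| <= twin_number e by rewrite /twin_number; apply: (@leq_bigmax T (fun u => #|twin_class e u|) x0).
lia.
Qed.

Lemma module_twin (M : {set T}) x0 :
  (forall x y z, x \in M -> y \in M -> z \notin M -> e x z = e y z) ->
  (forall x, x \in M -> (forall y, y \in M -> ~~ e x y) \/ (forall y, y \in M -> y != x -> e x y)) ->
  x0 \in M -> #|T| < 2 * #|M| -> False.
Proof.
move=> hmod hdi hx0; apply: (twin_big hx0) => y hy; exact: (twins_dich hmod hdi hx0 hy).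
Qed.

Lemma dich_or (M : {set T}) :
  (exists x y z, [/\ x \in M, y \in M, z \in M, e x y & (z != x) && ~~ e x z]) \/
  (forall x, x \in M -> (forall y, y \in M -> ~~ e x y) \/ (forall y, y \in M -> y != x -> e x y)).
Proof.
case: (boolP [exists x in M, [exists y in M, e x y] && [exists z in M, (z != x) && ~~ e x z]]).
  case/exists_inP => x hx /andP[/exists_inP[y hy hxy] /exists_inP[z hz hxz]].
  by left; exists x, y, z.
move/exists_inPn => h; right => x hx; move: (h x hx); rewrite negb_and => /orP[/exists_inPn hn|/exists_inPn hn].
  by left.
right => y hy hyx; move: (hn y hy); rewrite negb_and hyx /=; exact: negbNE.
Qed.

Lemma adj_res p q w : e p w -> ~~ e q w -> dist e p w != dist e q w.
Proof. by rewrite -!dist_eq1 => /eqP ->; rewrite eq_sym. Qed.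

Lemma star w p1 p2 p3 q1 q2 q3 :
  uniq [:: p1; q1; p2; q2; p3; q3] -> w \notin [:: p1; q1; p2; q2; p3; q3] ->
  e p1 w -> e p2 w -> e p3 w -> ~~ e q1 w -> ~~ e q2 w -> ~~ e q3 w ->
  partition_dim e <= #|T| - 3.
Proof.
move=> hu hw h1 h2 h3 h4 h5 h6.
by apply: (config hu hw hw hw); apply: adj_res.
Qed.

Ltac contra_tac := match goal with
 | H : is_true (negb (?a == ?a)) |- _ => by rewrite eqxx in H
 | H : is_true (?x \in ?M), H' : is_true (?x \notin ?M) |- _ => by rewrite H in H'
 | H : is_true (e ?x ?x) |- _ => by rewrite eirr in H
 | H : is_true (e ?x ?y), H' : is_true (negb (e ?x ?y)) |- _ => by rewrite H in H'
 | H : is_true (e ?x ?y), H' : is_true (negb (e ?y ?x)) |- _ => by rewrite esym H in H'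
 end.
Ltac diseq := first [ done | assumption | rewrite eq_sym; assumption | apply/negP => /eqP ?; subst; contra_tac ].
Ltac uniq_tac := rewrite /= ?inE ?negb_or; repeat (apply/andP; split); diseq.

Lemma shape2 (a1 a2 b1 b2 : T) (M : {set T}) :
  a1 \notin M -> a2 \notin M -> b1 \notin M -> b2 \notin M ->
  uniq [:: a1; a2; b1; b2] ->
  (forall x, x \in M \/ x \in [:: a1; a2; b1; b2]) ->
  (forall m, m \in M -> [/\ e m a1, e m a2, ~~ e m b1 & ~~ e m b2]) ->
  partition_dim e <= #|T| - 3.
Proof.
move=> na1 na2 nb1 nb2 hu hcov hadj.
have hu' := hu; move: hu'; rewrite /= !inE !negb_or -?andbA => H; repeat (case/andP: H => ? H).
have hcard : #|T| <= #|M| + 4 := cover_card hcov.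
have hmod : forall x y z, x \in M -> y \in M -> z \notin M -> e x z = e y z.
  move=> x y z hx hy hz; case: (hcov z) => [hz'|]; first by rewrite hz' in hz.
  have [? ? ? ?] := hadj x hx; have [? ? ? ?] := hadj y hy.
  by rewrite !inE => /or4P[]/eqP->; apply/idP/idP; rewrite // => ?; contra_tac.
case: (dich_or M) => [[x [y [z [hx hy hz hxy /andP[hzx hxz]]]]] | hdi].
  have [h1 h2 h3 h4] := hadj x hx.
  apply: (@star x a1 a2 y b1 b2 z); first [by rewrite esym | uniq_tac].
have [x0 hx0 _] : exists2 x, x \in M & x \notin [::] by apply: pick; apply: (arb n9 hcard).
exfalso; apply: (module_twin hmod hdi hx0); exact: (art n9 hcard).
Qed.

Lemma shape1 (p q r : T) (M : {set T}) :
  p \notin M -> q \notin M -> r \notin M -> uniq [:: p; q; r] ->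
  (forall x, x \in M \/ x \in [:: p; q; r]) ->
  e p q -> ~~ e p r -> ~~ e q r ->
  (forall m, m \in M -> [/\ e m q, e m r & ~~ e m p]) ->
  partition_dim e <= #|T| - 3.
Proof.
move=> np nq nr hu hcov hpq hpr hqr hadj.
have hu' := hu; move: hu'; rewrite /= !inE !negb_or -?andbA => H; repeat (case/andP: H => ? H).
have hcard : #|T| <= #|M| + 3 := cover_card hcov.
have hmod : forall x y z, x \in M -> y \in M -> z \notin M -> e x z = e y z.
  move=> x y z hx hy hz; case: (hcov z) => [hz'|]; first by rewrite hz' in hz.
  have [? ? ?] := hadj x hx; have [? ? ?] := hadj y hy.
  by rewrite !inE => /or3P[]/eqP->; apply/idP/idP; rewrite // => ?; contra_tac.
pose NN x := [set z in M | (z != x) && ~~ e x z].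
case: (boolP [exists x in M, [exists y in M, e x y] && (1 < #|NN x|)]).
  case/exists_inP => x hx /andP[/exists_inP[y hy hxy] hc].
  have [z1 hz1 _] : exists2 z, z \in NN x & z \notin [::] by apply: pick; exact: ltnW hc.
  have [z2 hz2 hz21] : exists2 z, z \in NN x & z \notin [:: z1] by apply: pick; exact: hc.
  move: hz1 hz2; rewrite !inE => /andP[hz1M /andP[hz1x hxz1]] /andP[hz2M /andP[hz2x hxz2]].
  move: hz21; rewrite inE => hz21.
  have [h1 h2 h3] := hadj x hx.
  apply: (@star x q r y p z1 z2); first [by rewrite esym | uniq_tac].
move/exists_inPn => hn.
have one : forall x z z', x \in M -> z \in M -> z' \in M -> z != x -> z' != x ->
    ~~ e x z -> ~~ e x z' -> (exists2 y, y \in M & e x y) -> z = z'.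
  move=> x z z' hx hz hz' hzx hz'x hxz hxz' [y hy hxy]; apply/eqP; apply: contraTT (hn x hx) => hne.
  rewrite negbK; apply/andP; split; first by apply/exists_inP; exists y.
  by apply: (@two_le _ z z'); rewrite // !inE ?hz ?hz' ?hzx ?hz'x.
case: (boolP [exists x0 in M, [forall y in M, ~~ e x0 y]]).
  case/exists_inP => x0 hx0 /forall_inP hiso.
  pose K := M :\ x0.
  have hK : #|M| = #|K| + 1 by rewrite (cardsD1 x0 M) hx0 addnC.
  have hmodK : forall x y z, x \in K -> y \in K -> z \notin K -> e x z = e y z.
    move=> x y z; rewrite !inE => /andP[hx0x hx] /andP[hx0y hy]; rewrite negb_and negbK.
    case/orP => [/eqP->|hz]; last exact: hmod.
    by rewrite (esym x) (esym y) (negbTE (hiso _ hx)) (negbTE (hiso _ hy)).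
  have hdiK : forall x, x \in K -> (forall y, y \in K -> ~~ e x y) \/ (forall y, y \in K -> y != x -> e x y).
    move=> x; rewrite !inE => /andP[hxx0 hx].
    case: (boolP [exists y in M, e x y]) => [/exists_inP[y hy hxy]|/exists_inPn hno].
      right => y'; rewrite !inE => /andP[hy'x0 hy'] hy'x; apply/negPn/negP => hxy'.
      have hnx0 : ~~ e x x0 by rewrite esym hiso.
      have := one x y' x0 hx hy' hx0 hy'x ltac:(by rewrite eq_sym) hxy' hnx0 (ex_intro2 _ _ y hy hxy).
      by move=> h; rewrite h eqxx in hy'x0.
    by left => y; rewrite !inE => /andP[_ hy]; exact: hno.
  have hcK : #|T| <= #|K| + 4 by move: hcard; rewrite hK -addnA.
  have [k0 hk0 _] : exists2 x, x \in K & x \notin [::] by apply: pick; apply: (arb n9 hcK).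
  exfalso; apply: (module_twin hmodK hdiK hk0); exact: (art n9 hcK).
move/exists_inPn => hnoiso.
have hasnb : forall x, x \in M -> exists2 y, y \in M & e x y.
  move=> x hx; move: (hnoiso x hx); rewrite negb_forall_in => /exists_inP[y hy]; rewrite negbK => hxy.
  by exists y.
case: (boolP [forall x in M, [forall y in M, (y != x) ==> e x y]]).
  move/forall_inP => hcl; exfalso.
  have [x0 hx0 _] : exists2 x, x \in M & x \notin [::] by apply: pick; apply: (arb n9 hcard).
  apply: (module_twin hmod _ hx0); last exact: (art n9 hcard).
  move=> x hx; right => y hy hyx; move/forall_inP: (hcl x hx) => /(_ y hy); rewrite hyx; exact.
rewrite negb_forall_in => /exists_inP[x1 hx1]; rewrite negb_forall_in => /exists_inP[x2 hx2].
rewrite negb_imply => /andP[hx21 hx12].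
have [x3 hx3 n3] : exists2 z, z \in M & z \notin [:: x1; x2] by apply: pick; apply: (arb n9 hcard).
have [c1 hc1 nc1] : exists2 z, z \in M & z \notin [:: x1; x2; x3] by apply: pick; apply: (arb n9 hcard).
have [c2 hc2 nc2] : exists2 z, z \in M & z \notin [:: x1; x2; x3; c1] by apply: pick; apply: (arb n9 hcard).
move: n3 nc1 nc2; rewrite !inE !negb_or -?andbA => n3 nc1 nc2.
repeat (case/andP: n3 => ? n3); repeat (case/andP: nc1 => ? nc1); repeat (case/andP: nc2 => ? nc2).
have [x4 [hx4 n4 h34]] : exists x4, [/\ x4 \in M, x4 \notin [:: x1; x2; x3] & e x3 x4].
  case: (boolP (e x3 c1)) => h31; first by exists c1; split => //; rewrite !inE !negb_or; uniq_tac.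
  exists c2; split => //; first by rewrite !inE !negb_or; uniq_tac.
  apply/negPn/negP => h32.
  have := one x3 c1 c2 hx3 hc1 hc2 ltac:(diseq) ltac:(diseq) h31 h32 (hasnb _ hx3).
  by move=> ?; subst; contra_tac.
move: n4; rewrite !inE !negb_or -?andbA => n4; repeat (case/andP: n4 => ? n4).
have [x5 hx5 n5] : exists2 z, z \in M & z \notin [:: x1; x2; x3; x4] by apply: pick; apply: (arb n9 hcard).
have [x6 hx6 n6] : exists2 z, z \in M & z \notin [:: x1; x2; x3; x4; x5] by apply: pick; apply: (arb n9 hcard).
move: n5 n6; rewrite !inE !negb_or -?andbA => n5 n6.
repeat (case/andP: n5 => ? n5); repeat (case/andP: n6 => ? n6).
have h26 : e x2 x6.
  apply/negPn/negP => h26.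
  have := one x2 x1 x6 hx2 hx1 hx6 ltac:(diseq) ltac:(diseq) ltac:(by rewrite esym) h26 (hasnb _ hx2).
  by move=> ?; subst; contra_tac.
have [a5 b5 c5] := hadj x5 hx5; have [a3 b3 c3] := hadj x3 hx3.
have [a4 b4 c4] := hadj x4 hx4; have [a1 b1 c1'] := hadj x1 hx1.
have [a2 b2 c2'] := hadj x2 hx2; have [a6 b6 c6] := hadj x6 hx6.
apply: (@config r x5 p x4 x1 x6 q x3 x2); try uniq_tac.
- by rewrite eq_sym; apply: adj_res; rewrite // esym.
- by rewrite eq_sym; apply: adj_res; rewrite // esym.
- by rewrite eq_sym; apply: adj_res; rewrite // esym.
Qed.

Lemma shapeC2 (u a z0 v : T) (M : {set T}) :
  u \notin M -> a \notin M -> z0 \notin M -> v \notin M ->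
  uniq [:: u; a; z0; v] ->
  (forall x, x \in M \/ x \in [:: u; a; z0; v]) ->
  e u a -> ~~ e u z0 -> ~~ e u v -> e a z0 -> ~~ e a v -> e z0 v ->
  (forall m, m \in M -> [/\ e m a, ~~ e m u, ~~ e m z0 & ~~ e m v]) ->
  partition_dim e <= #|T| - 3.
Proof.
move=> nu na nz nv hu hcov hua huz huv haz hav hzv hadj.
have hu' := hu; move: hu'; rewrite /= !inE !negb_or -?andbA => H; repeat (case/andP: H => ? H).
have hcard : #|T| <= #|M| + 4 := cover_card hcov.
case: (boolP [exists x in M, [exists y in M, [exists y' in M, (y != y') && e x y && e x y']]]).
  case/exists_inP => x hx /exists_inP[y hy] /exists_inP[y' hy'] /andP[/andP[hyy' hxy] hxy'].
  have [h1 h2 h3 h4] := hadj x hx.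
  apply: (@star x a y y' u v z0); first [by rewrite esym | uniq_tac].
move/exists_inPn => hd.
have hdeg : forall x y y', x \in M -> y \in M -> y' \in M -> e x y -> e x y' -> y = y'.
  move=> x y y' hx hy hy' hxy hxy'; apply/eqP; apply/negPn/negP => hne.
  move: (hd x hx); rewrite negb_exists_in => /forall_inP /(_ y hy).
  rewrite negb_exists_in => /forall_inP /(_ y' hy'); by rewrite hne hxy hxy'.
case: (boolP [exists y1 in M, [exists y2 in M, e y1 y2]]).
  case/exists_inP => y1 hy1 /exists_inP[y2 hy2 h12].
  have fin : forall i1 i2 i3, i1 \in M -> i2 \in M -> i3 \in M ->
      uniq [:: y1; y2; i1; i2; i3] -> ~~ e i2 i3 -> partition_dim e <= #|T| - 3.
    move=> i1 i2 i3 hi1 hi2 hi3 hui hn23.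
    move: hui; rewrite /= !inE !negb_or -?andbA => H2; repeat (case/andP: H2 => ? H2).
    have [a1 b1 c1 d1] := hadj i1 hi1; have [a2 b2 c2 d2] := hadj i2 hi2.
    have [a3 b3 c3 d3'] := hadj i3 hi3; have [a4 b4 c4 d4] := hadj y1 hy1.
    have [a5 b5 c5 d5] := hadj y2 hy2.
    apply: (@config v i1 u y1 a i2 z0 y2 i3); try uniq_tac.
    - by apply: adj_res; rewrite // esym.
    - by rewrite eq_sym; apply: adj_res; rewrite // esym.
    - by apply: adj_res; rewrite // esym.
  have [c1 hc1 n1] : exists2 z, z \in M & z \notin [:: y1; y2] by apply: pick; apply: (arb n9 hcard).
  have [c2 hc2 n2] : exists2 z, z \in M & z \notin [:: y1; y2; c1] by apply: pick; apply: (arb n9 hcard).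
  have [c3 hc3 n3] : exists2 z, z \in M & z \notin [:: y1; y2; c1; c2] by apply: pick; apply: (arb n9 hcard).
  move: n1 n2 n3; rewrite !inE !negb_or -?andbA => n1 n2 n3.
  repeat (case/andP: n1 => ? n1); repeat (case/andP: n2 => ? n2); repeat (case/andP: n3 => ? n3).
  case: (boolP (e c1 c2)) => hc12.
    have hn13 : ~~ e c1 c3.
      apply/negP => hc13; have := hdeg c1 c2 c3 hc1 hc2 hc3 hc12 hc13; move=> ?; subst; contra_tac.
    by apply: (fin c2 c1 c3) => //; uniq_tac.
  by apply: (fin c3 c1 c2) => //; uniq_tac.
move/exists_inPn => hnoe.
pose M' := u |: M.
have hM' : #|M'| = #|M| + 1 by rewrite cardsU1 nu addnC.
have hc' : #|T| <= #|M'| + 3 by rewrite hM' -addnA.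
have hiso : forall x, x \in M -> forall y, y \in M -> ~~ e x y.
  by move=> x hx y hy; move: (hnoe x hx); rewrite negb_exists_in => /forall_inP; apply.
apply: False_ind; apply: (@module_twin M' u).
- move=> x y z; rewrite !inE => hx hy; rewrite negb_or => /andP[hzu hzM].
  have : z \in [:: u; a; z0; v] by case: (hcov z) => //; rewrite (negbTE hzM).
  rewrite !inE (negbTE hzu) /= => hz.
  have ex : forall w, w \in M' -> [/\ e w a, ~~ e w z0 & ~~ e w v].
    move=> w; rewrite !inE => /orP[/eqP->|hw]; first by split.
    by have [? ? ? ?] := hadj w hw.
  have [xa xz xv] := ex x ltac:(by rewrite !inE). have [ya yz yv] := ex y ltac:(by rewrite !inE).
  case/or3P: hz => /eqP->; rewrite ?xa ?ya //; [rewrite (negbTE xz) (negbTE yz) // | rewrite (negbTE xv) (negbTE yv) //].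
- move=> x; rewrite !inE => hx; left => y; rewrite !inE.
  case/orP: hx => [/eqP->|hx]; case/orP => [/eqP->|hy]; rewrite ?eirr //.
  + by have [_ hh _ _] := hadj y hy; rewrite esym.
  + by have [_ hh _ _] := hadj x hx.
  + exact: hiso.
- by rewrite !inE eqxx.
- exact: (art n9 hc').
Qed.

Lemma shapeA (u a b : T) (M : {set T}) :
  u \notin M -> a \notin M -> b \notin M -> uniq [:: u; a; b] ->
  (forall x, x \in M \/ x \in [:: u; a; b]) ->
  e u a -> ~~ e u b -> e a b ->
  (forall m, m \in M -> [/\ e m b, ~~ e m a, ~~ e m u & dist e u m = 3]) ->
  partition_dim e <= #|T| - 3.
Proof.
move=> nu na nb hu hcov hua hub hab hadj.
have hu' := hu; move: hu'; rewrite /= !inE !negb_or -?andbA => H; repeat (case/andP: H => ? H).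
have hcard : #|T| <= #|M| + 3 := cover_card hcov.
have hmod : forall x y z, x \in M -> y \in M -> z \notin M -> e x z = e y z.
  move=> x y z hx hy hz; case: (hcov z) => [hz'|]; first by rewrite hz' in hz.
  have [? ? ? _] := hadj x hx; have [? ? ? _] := hadj y hy.
  by rewrite !inE => /or3P[]/eqP->; apply/idP/idP; rewrite // => ?; contra_tac.
case: (dich_or M) => [[x [y [z [hx hy hz hxy /andP[hzx hxz]]]]] | hdi]; last first.
  have [x0 hx0 _] : exists2 x, x \in M & x \notin [::] by apply: pick; apply: (arb n9 hcard).
  by exfalso; apply: (module_twin hmod hdi hx0); exact: (art n9 hcard).
have [t ht nt] : exists2 t, t \in M & t \notin [:: x; y; z] by apply: pick; apply: (arb n9 hcard).
move: nt; rewrite !inE !negb_or -?andbA => nt; repeat (case/andP: nt => ? nt).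
have [xb xa xu dux] := hadj x hx; have [yb ya yu _] := hadj y hy.
have [zb za zu _] := hadj z hz; have [tb ta tu _] := hadj t ht.
have dbx : dist e b x = 1 by apply/eqP; rewrite dist_eq1 esym.
have dyx : dist e y x = 1 by apply/eqP; rewrite dist_eq1 esym.
have dax : dist e a x = 2.
  apply: (dist2 hab); first [by rewrite esym | diseq].
have dzx : dist e z x = 2.
  apply: (dist2 (z := b)); first [by rewrite esym | done | diseq].
case: (boolP (e t x)) => htx.
  have dtx : dist e t x = 1 by apply/eqP; rewrite dist_eq1.
  apply: (@config b a y z t u x x x); try uniq_tac; by rewrite ?dbx ?dax ?dyx ?dzx ?dtx ?dux.
have dtx : dist e t x = 2.
  apply: (dist2 (z := b)); first [by rewrite esym | done | diseq].
apply: (@config a u b z y t x x x); try uniq_tac; by rewrite ?dbx ?dax ?dyx ?dzx ?dtx ?dux.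
Qed.

Lemma dneq x y w i j : dist e x w = i -> dist e y w = j -> i != j -> x != y.
Proof. by move=> hx hy; apply: contra_neq => E; rewrite -hx -hy E. Qed.

Lemma degen w k p q :
  #|[set x | (x != w) && (dist e x w != k)]| <= 2 -> p != q ->
  p != w -> dist e p w != k -> q != w -> dist e q w != k ->
  forall x, x != w -> dist e x w != k -> x = p \/ x = q.
Proof.
move=> hc hpq hpw hp hqw hq x hxw hx.
case: (eqVneq x p) => [->|hxp]; first by left.
case: (eqVneq x q) => [->|hxq]; first by right.
have : [set x; p; q] \subset [set x | (x != w) && (dist e x w != k)].
  by apply/subsetP => z; rewrite !inE => /orP[/orP[]|] /eqP ->; apply/andP.
move/subset_leq_card; rewrite setUC !cardsU1 cards1 !inE negb_or (eq_sym q x) (eq_sym q p) hxq hpq hxp /=.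
move=> h; have := leq_trans h hc; by [].
Qed.

Lemma layer (w : T) : partition_dim e <= #|T| - 3 \/
  exists k, [/\ 0 < k, k <= 3 & #|[set x | (x != w) && (dist e x w != k)]| <= 2].
Proof.
pose L k := [set x | dist e x w == k].
pose C k := [set x | (x != w) && (dist e x w != k)].
have hsub : [set: T] \subset w |: (L 1 :|: L 2 :|: L 3).
  apply/subsetP => x _; rewrite !inE; case: (eqVneq x w) => //= hxw.
  have := d3 x w; have := dist_eq0 x w; rewrite (negbTE hxw).
  by case: (dist e x w) => [|[|[|[|n]]]].
have hS : #|T| <= 1 + (#|L 1| + #|L 2| + #|L 3|).
  have := subset_leq_card hsub; rewrite cardsT => h; apply: (leq_trans h).
  rewrite cardsU1; apply: leq_add; first by case: (_ \notin _).
  apply: leq_trans (leq_card_setU _ _) _; rewrite leq_add2r.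
  exact: leq_card_setU.
have [k [k0 k3 hL]] : exists k, [/\ 0 < k, k <= 3 & 2 < #|L k|].
  case: (leqP #|L 1| 2) => h1; last by exists 1.
  case: (leqP #|L 2| 2) => h2; last by exists 2.
  case: (leqP #|L 3| 2) => h3; last by exists 3.
  exfalso; move: hS n9 h1 h2 h3; clear; lia.
case: (leqP #|C k| 2) => hc; first by right; exists k.
left.
have [x1 hx1 _] : exists2 z, z \in L k & z \notin [::] by apply: pick; apply: ltnW (ltnW hL).
have [x2 hx2 n2] : exists2 z, z \in L k & z \notin [:: x1] by apply: pick; apply: ltnW hL.
have [x3 hx3 n3] : exists2 z, z \in L k & z \notin [:: x1; x2] by apply: pick.
have [y1 hy1 _] : exists2 z, z \in C k & z \notin [::] by apply: pick; apply: ltnW (ltnW hc).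
have [y2 hy2 m2] : exists2 z, z \in C k & z \notin [:: y1] by apply: pick; apply: ltnW hc.
have [y3 hy3 m3] : exists2 z, z \in C k & z \notin [:: y1; y2] by apply: pick.
move: n2 n3 m2 m3; rewrite !inE !negb_or => n2 /andP[n31 n32] m2 /andP[m31 m32].
have LC : forall x y, x \in L k -> y \in C k -> x != y.
  move=> x y; rewrite !inE => /eqP hx /andP[_ hy]; apply: contra_neq hy => <-; exact: hx.
have wL : w \notin L k by rewrite inE dist_xx eq_sym -lt0n k0.
have wC : w \notin C k by rewrite inE eqxx.
have hwn : forall x, x \in L k -> w != x by move=> x hx; apply/eqP => E; by rewrite E hx in wL.
have hwc : forall x, x \in C k -> w != x by move=> x hx; apply/eqP => E; by rewrite E hx in wC.
have dd : forall x y, x \in L k -> y \in C k -> dist e x w != dist e y w.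
  by move=> x y; rewrite !inE => /eqP -> /andP[_]; rewrite eq_sym.
apply: (@config x1 y1 x2 y2 x3 y3 w w w); try exact: dd.
  rewrite /= !inE !negb_or; repeat (apply/andP; split);
    first [done | assumption | by rewrite eq_sym | by apply: LC | by rewrite eq_sym; apply: LC].
all: rewrite !inE !negb_or; repeat (apply/andP; split); first [by apply: hwn | by apply: hwc].
Qed.

Lemma e_dist1 x y : e x y -> dist e x y = 1.
Proof. by rewrite -dist_eq1 => /eqP. Qed.

Lemma ne_dist1 x y : ~~ e x y -> dist e x y != 1.
Proof. by rewrite dist_eq1. Qed.

Lemma dist1_e x y : dist e x y = 1 -> e x y.
Proof. by move=> h; rewrite -dist_eq1 h. Qed.

Lemma ne_of_dist x w : dist e x w != 0 -> x != w.
Proof. by rewrite dist_eq0. Qed.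

Lemma main_thm u v : dist e v u = 3 -> partition_dim e <= #|T| - 3.
Proof.
move=> hvu.
have [b hvb hbu] := dist_step hvu.
have [a hba hau] := dist_step hbu.
have hab : e a b by rewrite esym.
have hbv : e b v by rewrite esym.
have hua : e u a by rewrite esym; apply: dist1_e.
have duu := dist_xx u.
have nua : u != a by apply: (dneq duu hau).
have nub : u != b by apply: (dneq duu hbu).
have nuv : u != v by apply: (dneq duu hvu).
have nab : a != b by apply: (dneq hau hbu).
have nav : a != v by apply: (dneq hau hvu).
have nbv : b != v by apply: (dneq hbu hvu).
have huv3 : dist e u v = 3 by rewrite dist_sym.
have [//|[k [k0 k3 hC]]] := layer u.
have hk : [|| k == 1, k == 2 | k == 3] by move: k0 k3; case: (k) => [|[|[|[|]]]].
case/or3P: hk => /eqP hk; subst k.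
- have hdg := degen hC nbv ltac:(by rewrite eq_sym) ltac:(by rewrite hbu)
    ltac:(by rewrite eq_sym) ltac:(by rewrite hvu).
  pose X := [set x | dist e x u == 1].
  have inX : forall x, (x \in X) = (dist e x u == 1) by move=> x; rewrite inE.
  have uX : u \notin X by rewrite inX duu.
  have bX : b \notin X by rewrite inX hbu.
  have vX : v \notin X by rewrite inX hvu.
  have aX : a \in X by rewrite inX hau.
  have hNv : forall y, e v y -> y = b.
    move=> y hvy; have := dist_lip u hvy; rewrite hvu => h.
    have hy0 : y != u by apply: ne_of_dist; move: h; case: (dist e y u) => [|[|]].
    case: (hdg y hy0 ltac:(by move: h; case: (dist e y u) => [|[|]])) => // hy.
    by rewrite hy eirr in hvy.
  have hcov : forall x, x \in X \/ x \in [:: u; b; v].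
    move=> x; case: (eqVneq x u) => [->|hxu]; first by right; rewrite !inE eqxx.
    case: (boolP (dist e x u == 1)) => hx1; first by left; rewrite inX.
    by right; case: (hdg x hxu hx1) => ->; rewrite !inE eqxx ?orbT.
  have hcX : #|T| <= #|X| + 3 := cover_card hcov.
  have hXu : forall x, x \in X -> e x u by move=> x; rewrite inX => /eqP; apply: dist1_e.
  have hXv : forall x, x \in X -> ~~ e x v.
    by move=> x hx; apply/negP => hxv; have := hNv x ltac:(by rewrite esym) => E; rewrite -E hx in bX.
  have dbv : dist e b v = 1 := e_dist1 hbv.
  have nav' : ~~ e a v by apply: hXv.
  have dav : dist e a v = 2 := dist2 hab hbv nav nav'.
  have [//|[k' [k'0 k'3 hC']]] := layer v.
  have hk' : [|| k' == 1, k' == 2 | k' == 3] by move: k'0 k'3; case: (k') => [|[|[|[|]]]].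
  case/or3P: hk' => /eqP hk'; subst k'.
  + have hdg' := degen (p := a) (q := u) hC' ltac:(by rewrite eq_sym) nav ltac:(by rewrite dav) nuv ltac:(by rewrite huv3).
    have [x hx nx] : exists2 x, x \in X & x \notin [:: a] by apply: pick; apply: (arb n9 hcX).
    move: nx; rewrite inE => nxa.
    have nxv : x != v by apply/eqP => E; rewrite -E hx in vX.
    case: (hdg' x nxv ltac:(by apply: ne_dist1; apply: hXv)) => E.
      by rewrite E eqxx in nxa.
    by rewrite -E hx in uX.
  + have hdg' := degen (p := b) (q := u) hC' ltac:(by rewrite eq_sym) nbv ltac:(by rewrite dbv) nuv ltac:(by rewrite huv3).
    have hXb : forall x, x \in X -> e x b.
      move=> x hx.
      have nxv : x != v by apply/eqP => E; rewrite -E hx in vX.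
      have hx2 : dist e x v = 2.
        apply/eqP; apply/negPn/negP => hx2.
        by case: (hdg' x nxv hx2) => E; [rewrite -E hx in bX | rewrite -E hx in uX].
      have [z hxz hz] := dist_step hx2.
      by move: hxz; rewrite (hNv z ltac:(by rewrite esym; apply: dist1_e)).
    apply: (@shape1 v b u X) => //.
    * uniq_tac.
    * move=> x; case: (hcov x) => [->|hx]; first by left.
      by right; move: hx; rewrite !inE => /or3P[]/eqP->; rewrite eqxx ?orbT.
    * by apply/negP => hvu'; move: (hNv u hvu') => E; rewrite E eqxx in nub.
    * by rewrite -dist_eq1 hbu.
    * by move=> m hm; split; [apply: hXb | apply: hXu | apply: hXv].
  + have hdg' := degen (p := b) (q := a) hC' ltac:(by rewrite eq_sym) nbv ltac:(by rewrite dbv) nav ltac:(by rewrite dav).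
    pose M := X :\ a.
    have inM : forall x, (x \in M) = (x != a) && (x \in X) by move=> x; rewrite !inE.
    have hM : forall x, x \in M -> [/\ e x u, e x a, ~~ e x b & ~~ e x v].
      move=> x; rewrite inM => /andP[nxa hx].
      have nxv : x != v by apply/eqP => E; rewrite -E hx in vX.
      have hx3 : dist e x v = 3.
        apply/eqP; apply/negPn/negP => hx3.
        by case: (hdg' x nxv hx3) => E; [rewrite -E hx in bX | rewrite E eqxx in nxa].
      split; [exact: hXu | | | exact: hXv].
      * have [z hxz hz] := dist_step hx3.
        have nzv : z != v by apply: ne_of_dist; rewrite hz.
        by case: (hdg' z nzv ltac:(by rewrite hz)) => E; [rewrite E dbv in hz | rewrite -E].
      * by apply/negP => hxb; have := dist_lip v hxb; rewrite hx3 dbv.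
    apply: (@shape2 u a b v M).
    * by rewrite inM (negbTE uX) andbF.
    * by rewrite inM eqxx.
    * by rewrite inM (negbTE bX) andbF.
    * by rewrite inM (negbTE vX) andbF.
    * uniq_tac.
    * move=> x; case: (eqVneq x a) => [->|nxa]; first by right; rewrite !inE eqxx ?orbT.
      case: (hcov x) => [hx|hx]; first by left; rewrite inM nxa hx.
      by right; move: hx; rewrite !inE => /or3P[]/eqP->; rewrite eqxx ?orbT.
    * exact: hM.
- have hdg := degen (p := a) (q := v) hC nav ltac:(by rewrite eq_sym) ltac:(by rewrite hau)
    ltac:(by rewrite eq_sym) ltac:(by rewrite hvu).
  pose X := [set x | dist e x u == 2].
  have inX : forall x, (x \in X) = (dist e x u == 2) by move=> x; rewrite inE.
  have uX : u \notin X by rewrite inX duu.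
  have aX : a \notin X by rewrite inX hau.
  have vX : v \notin X by rewrite inX hvu.
  have bX : b \in X by rewrite inX hbu.
  have hNu : forall y, e u y -> y = a.
    move=> y huy; have hy1 : dist e y u = 1 by apply: e_dist1; rewrite esym.
    have hy0 : y != u by apply: ne_of_dist; rewrite hy1.
    case: (hdg y hy0 ltac:(by rewrite hy1)) => // E.
    by rewrite E hvu in hy1.
  have hXa : forall x, x \in X -> e x a.
    move=> x; rewrite inX => /eqP hx.
    have [z hxz hz] := dist_step hx.
    have hz0 : z != u by apply: ne_of_dist; rewrite hz.
    by case: (hdg z hz0 ltac:(by rewrite hz)) => E; [rewrite -E | rewrite E hvu in hz].
  have nav' : ~~ e a v.
    by apply/negP => h; have := dist_lip u (etrans (esym v a) h); rewrite hvu hau.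
  have hNv : forall y, e v y -> y \in X.
    move=> y hvy; have := dist_lip u hvy; rewrite hvu => h.
    have hy0 : y != u by apply: ne_of_dist; move: h; case: (dist e y u) => [|[|]].
    case: (boolP (dist e y u == 2)) => hy2; first by rewrite inX.
    case: (hdg y hy0 hy2) => E; last by rewrite E eirr in hvy.
    by move: h; rewrite E hau.
  have hcov : forall x, x \in X \/ x \in [:: u; a; v].
    move=> x; case: (eqVneq x u) => [->|hxu]; first by right; rewrite !inE eqxx.
    case: (boolP (dist e x u == 2)) => hx2; first by left; rewrite inX.
    by right; case: (hdg x hxu hx2) => ->; rewrite !inE eqxx ?orbT.
  have hcX : #|T| <= #|X| + 3 := cover_card hcov.
  have hXu : forall x, x \in X -> ~~ e x u.
    by move=> x hx; apply/negP => h; have := hNu x ltac:(by rewrite esym) => E; rewrite -E hx in aX.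
  have dbv : dist e b v = 1 := e_dist1 hbv.
  have dav : dist e a v = 2 := dist2 hab hbv nav nav'.
  have nuv' : ~~ e u v by apply/negP => h; move: (hNu v h) => E; rewrite E eqxx in nav.
  have hXnv : forall x, x \in X -> x != v by move=> x hx; apply/eqP => E; rewrite -E hx in vX.
  have [//|[k' [k'0 k'3 hC']]] := layer v.
  have hk' : [|| k' == 1, k' == 2 | k' == 3] by move: k'0 k'3; case: (k') => [|[|[|[|]]]].
  case/or3P: hk' => /eqP hk'; subst k'.
  + have hdg' := degen (p := a) (q := u) hC' ltac:(by rewrite eq_sym) nav ltac:(by rewrite dav) nuv ltac:(by rewrite huv3).
    have hXv : forall x, x \in X -> e x v.
      move=> x hx; apply: dist1_e; apply/eqP; apply/negPn/negP => h1.
      by case: (hdg' x (hXnv x hx) h1) => E; [rewrite -E hx in aX | rewrite -E hx in uX].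
    apply: (@shape1 u a v X uX aX vX); [uniq_tac | | exact: hua | exact: nuv' | exact: nav' |].
    * move=> x; case: (hcov x) => [->|hx]; first by left.
      by right; move: hx; rewrite !inE => /or3P[]/eqP->; rewrite eqxx ?orbT.
    * by move=> m hm; split; [apply: hXa | apply: hXv | apply: hXu].
  + have hdg' := degen (p := b) (q := u) hC' ltac:(by rewrite eq_sym) nbv ltac:(by rewrite dbv) nuv ltac:(by rewrite huv3).
    pose M := X :\ b.
    have inM : forall x, (x \in M) = (x != b) && (x \in X) by move=> x; rewrite !inE.
    have hM : forall x, x \in M -> [/\ e x a, e x b, ~~ e x u & ~~ e x v].
      move=> x; rewrite inM => /andP[nxb hx].
      have hx2 : dist e x v = 2.
        apply/eqP; apply/negPn/negP => hx2.
        by case: (hdg' x (hXnv x hx) hx2) => E; [rewrite E eqxx in nxb | rewrite -E hx in uX].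
      split; [exact: hXa | | exact: hXu | by rewrite -dist_eq1 hx2].
      have [z hxz hz] := dist_step hx2.
      have nzv : z != v by apply: ne_of_dist; rewrite hz.
      by case: (hdg' z nzv ltac:(by rewrite hz)) => E; [rewrite -E | rewrite E huv3 in hz].
    apply: (@shape2 a b u v M).
    * by rewrite inM (negbTE aX) andbF.
    * by rewrite inM eqxx.
    * by rewrite inM (negbTE uX) andbF.
    * by rewrite inM (negbTE vX) andbF.
    * uniq_tac.
    * move=> x; case: (eqVneq x b) => [->|nxb]; first by right; rewrite !inE eqxx ?orbT.
      case: (hcov x) => [hx|hx]; first by left; rewrite inM nxb hx.
      by right; move: hx; rewrite !inE => /or3P[]/eqP->; rewrite eqxx ?orbT.
    * exact: hM.
  + have hdg' := degen (p := b) (q := a) hC' ltac:(by rewrite eq_sym) nbv ltac:(by rewrite dbv) nav ltac:(by rewrite dav).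
    pose M := X :\ b.
    have inM : forall x, (x \in M) = (x != b) && (x \in X) by move=> x; rewrite !inE.
    have hM : forall x, x \in M -> [/\ e x a, ~~ e x u, ~~ e x b & ~~ e x v].
      move=> x; rewrite inM => /andP[nxb hx].
      have hx3 : dist e x v = 3.
        apply/eqP; apply/negPn/negP => hx3.
        by case: (hdg' x (hXnv x hx) hx3) => E; [rewrite E eqxx in nxb | rewrite -E hx in aX].
      split; [exact: hXa | exact: hXu | | by rewrite -dist_eq1 hx3].
      by apply/negP => hxb; have := dist_lip v hxb; rewrite hx3 dbv.
    apply: (@shapeC2 u a b v M).
    * by rewrite inM (negbTE uX) andbF.
    * by rewrite inM (negbTE aX) andbF.
    * by rewrite inM eqxx.
    * by rewrite inM (negbTE vX) andbF.
    * uniq_tac.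
    * move=> x; case: (eqVneq x b) => [->|nxb]; first by right; rewrite !inE eqxx ?orbT.
      case: (hcov x) => [hx|hx]; first by left; rewrite inM nxb hx.
      by right; move: hx; rewrite !inE => /or3P[]/eqP->; rewrite eqxx ?orbT.
    * exact: hua.
    * by apply/negP => h; move: (hNu b h) => E; rewrite E eqxx in nab.
    * exact: nuv'.
    * exact: hab.
    * exact: nav'.
    * exact: hbv.
    * exact: hM.
- have hdg := degen (p := a) (q := b) hC nab ltac:(by rewrite eq_sym) ltac:(by rewrite hau)
    ltac:(by rewrite eq_sym) ltac:(by rewrite hbu).
  pose X := [set x | dist e x u == 3].
  have inX : forall x, (x \in X) = (dist e x u == 3) by move=> x; rewrite inE.
  have uX : u \notin X by rewrite inX duu.
  have aX : a \notin X by rewrite inX hau.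
  have bX : b \notin X by rewrite inX hbu.
  have hNu : forall y, e u y -> y = a.
    move=> y huy; have hy1 : dist e y u = 1 by apply: e_dist1; rewrite esym.
    have hy0 : y != u by apply: ne_of_dist; rewrite hy1.
    case: (hdg y hy0 ltac:(by rewrite hy1)) => // E.
    by rewrite E hbu in hy1.
  have hNa : forall y, e a y -> y = u \/ y = b.
    move=> y hay; have := dist_lip u (etrans (esym y a) hay); rewrite hau => h.
    case: (eqVneq y u) => [->|hyu]; first by left.
    right; case: (hdg y hyu ltac:(by move: h; case: (dist e y u) => [|[|[|]]])) => // E.
    by rewrite E eirr in hay.
  have hXb : forall x, x \in X -> e x b.
    move=> x; rewrite inX => /eqP hx.
    have [z hxz hz] := dist_step hx.
    have hz0 : z != u by apply: ne_of_dist; rewrite hz.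
    by case: (hdg z hz0 ltac:(by rewrite hz)) => E; [rewrite E hau in hz | rewrite -E].
  have hcov : forall x, x \in X \/ x \in [:: u; a; b].
    move=> x; case: (eqVneq x u) => [->|hxu]; first by right; rewrite !inE eqxx.
    case: (boolP (dist e x u == 3)) => hx3; first by left; rewrite inX.
    by right; case: (hdg x hxu hx3) => ->; rewrite !inE eqxx ?orbT.
  apply: (@shapeA u a b X) => //.
  * uniq_tac.
  * by apply/negP => h; move: (hNu b h) => E; rewrite E eqxx in nab.
  * move=> m hm; split; first exact: hXb.
    - apply/negP => h; case: (hNa m ltac:(by rewrite esym)) => E.
        by rewrite -E hm in uX.
      by rewrite -E hm in bX.
    - by apply/negP => h; move: (hNu m ltac:(by rewrite esym)) => E; rewrite -E hm in aX.
    - by rewrite dist_sym; apply/eqP; rewrite -inX.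
Qed.

End Main.

Theorem proposition12 (T : finType) (e : rel T) :
  simple_graph e -> connected_graph e ->
  9 <= #|T| ->
  2 * twin_number e <= #|T| ->
  diam e = 3 ->
  partition_dim e <= #|T| - 3.
Proof.
move=> [hs hi] _ h9 htw hd.
have d3 : forall x y, dist e x y <= 3.
  move=> x y; rewrite -hd /diam.
  apply: (leq_trans (@leq_bigmax T (fun v => dist e x v) y)).
  exact: (@leq_bigmax T (fun u => \max_v dist e u v) x).
have hT : 0 < #|T| by apply: leq_trans h9.
have [u0 hu0] := @eq_bigmax T (fun u => \max_v dist e u v) hT.
have [v0 hv0] := @eq_bigmax T (fun v => dist e u0 v) hT.
have h3 : dist e u0 v0 = 3 by rewrite -hd /diam hu0 hv0.
by apply: (@main_thm T e hs hi h9 d3 htw v0 u0).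
Qed.
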